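(* Let $m\geq2$. Then a graph $G$ is minor maximal amongst graphs with $n$ vertices, at most $m$ parallel edges between any given pair of vertices, and spectator floor $n-1$, if and only if $G$ is an $m$-saturated crowded $1$-parade, i.e., every pair of its $n$ vertices is joined by exactly $m$ edges.
   Context: All graphs are finite, have at least one vertex, have no loops, and may have multiple (parallel) edges. A minor of $H$ is any graph obtained from $H$ by a sequence of: deleting an isolated vertex, deleting an edge, contracting an edge that has no edge parallel to it. A graph $G$ in a class $\mathcal{C}$ is minor maximal in $\mathcal{C}$ if no graph in $\mathcal{C}$ other than $G$ has $G$ as a minor. An $m$-saturated crowded $1$-parade is a graph in which every pair of vertices is joined by exactly $m$ edges. A unique shortest path is a shortest $u$–$v$ path $P$ such that every $u$–$v$ path with the same number of vertices is identical to $P$, where two paths with different edge sequences are different even if their vertex sequences agree; a single vertex is a unique shortest path. The parade number $\mathrm{usp}(G)$ is the largest number of vertices of a unique shortest path in $G$. The spectator number is $\mathrm{sp}(G)=|V(G)|-\mathrm{usp}(G)$. The spectator floor $\lfloor \mathrm{sp}\rfloor(G)$ is the minimum of $\mathrm{sp}(H)$ over all graphs $H$ of which $G$ is a minor. *)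

(* Defs.v *)
From mathcomp Require Import all_boot.
Set Implicit Arguments. Unset Strict Implicit. Unset Printing Implicit Defensive.

(* The edges between x and y are labelled
   0, ..., mult G x y - 1 (the same labels seen from either endpoint). *)
Record mgraph := MGraph {
  nv : nat;
  mult : 'I_nv -> 'I_nv -> nat;
  mult_sym : forall x y, mult x y = mult y x;
  mult_irr : forall x, mult x x = 0;
  nv_pos : 0 < nv }.
Arguments mult : clear implicits.

Definition iso (G H : mgraph) : Prop :=
  exists f : 'I_(nv G) -> 'I_(nv H),
    bijective f /\ forall x y, mult H (f x) (f y) = mult G x y.

Definition del_isolated_vertex (G H : mgraph) : Prop :=
  exists v : 'I_(nv G),
    (forall w, mult G v w = 0) /\ (nv H).+1 = nv G /\
    exists f : 'I_(nv H) -> 'I_(nv G),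
      injective f /\ (forall x, f x != v) /\
      forall x y, mult H x y = mult G (f x) (f y).

Definition del_edge (G H : mgraph) : Prop :=
  exists a b : 'I_(nv G), 0 < mult G a b /\
    exists f : 'I_(nv H) -> 'I_(nv G),
      bijective f /\
      forall x y, mult H x y =
        mult G (f x) (f y)
        - (((f x == a) && (f y == b)) || ((f x == b) && (f y == a))).

Definition contract_edge (G H : mgraph) : Prop :=
  exists a b : 'I_(nv G), mult G a b = 1 /\
    exists q : 'I_(nv G) -> 'I_(nv H),
      (forall X, exists x, q x = X) /\ q a = q b /\
      (forall x y, q x = q y -> x = y \/ (x \in [:: a; b] /\ y \in [:: a; b])) /\
      forall X Y, X != Y ->
        mult H X Y = \sum_(x | q x == X) \sum_(y | q y == Y) mult G x y.

Definition minor_step (G H : mgraph) : Prop :=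
  del_isolated_vertex G H \/ del_edge G H \/ contract_edge G H.

Inductive reaches : mgraph -> mgraph -> Prop :=
  | reaches_refl G : reaches G G
  | reaches_step G H K : minor_step G H -> reaches H K -> reaches G K.

Definition is_minor (G H : mgraph) : Prop :=
  exists K, reaches H K /\ iso K G.

Definition is_path (G : mgraph) (u v : 'I_(nv G))
    (rest : seq 'I_(nv G)) (es : seq nat) : Prop :=
  [/\ last u rest = v, uniq (u :: rest), size es = size rest &
      forall i, i < size rest ->
        nth 0 es i < mult G (nth u (u :: rest) i) (nth u rest i)].

Definition is_usp (G : mgraph) (u v : 'I_(nv G))
    (rest : seq 'I_(nv G)) (es : seq nat) : Prop :=
  [/\ is_path u v rest es,
      (forall rest' es', is_path u v rest' es' -> size rest <= size rest') &
      (forall rest' es', is_path u v rest' es' -> size rest' = size rest ->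
         rest' = rest /\ es' = es)].

Definition usp_eq (G : mgraph) (k : nat) : Prop :=
  (exists u v rest es, @is_usp G u v rest es /\ (size rest).+1 = k) /\
  (forall u v rest es, @is_usp G u v rest es -> (size rest).+1 <= k).

Definition sp_eq (G : mgraph) (s : nat) : Prop :=
  exists k, usp_eq G k /\ s = nv G - k.

Definition sp_floor_eq (G : mgraph) (f : nat) : Prop :=
  (exists H, is_minor G H /\ sp_eq H f) /\
  (forall H s, is_minor G H -> sp_eq H s -> f <= s).

Definition classC (n m : nat) (G : mgraph) : Prop :=
  [/\ nv G = n, (forall x y, mult G x y <= m) & sp_floor_eq G (n - 1)].

Definition minor_maximal (C : mgraph -> Prop) (G : mgraph) : Prop :=
  C G /\ forall H, C H -> is_minor G H -> iso H G.

Definition saturated (m : nat) (G : mgraph) : Prop :=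
  forall x y : 'I_(nv G), x != y -> mult G x y = m.

(* Main.v *)
Require Import Defs.
From mathcomp Require Import all_boot zify.
From Stdlib Require Import Classical_Prop.
Set Implicit Arguments. Unset Strict Implicit. Unset Printing Implicit Defensive.


Lemma sum_sub_le (I : finType) (P P' : pred I) (F : I -> nat) :
  (forall i, P i -> P' i) -> \sum_(i | P i) F i <= \sum_(i | P' i) F i.
Proof.
move=> H; rewrite [X in X <= _]big_mkcond [X in _ <= X]big_mkcond /=.
apply: leq_sum => i _; case: (boolP (P i)) => Pi; first by rewrite (H _ Pi).
by [].
Qed.

Lemma sum_inj_le (I J : finType) (f : I -> J) (P : pred J) (F : J -> nat) :
  injective f -> \sum_(i | P (f i)) F (f i) <= \sum_(j | P j) F j.
Proof.
move=> inj.
have -> : \sum_(i | P (f i)) F (f i) = \sum_(i in [pred i | P (f i)]) F (f i) by [].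
rewrite -(big_imset F (h := f)); last by move=> x y _ _; apply: inj.
apply: sum_sub_le => j /imsetP [i]; rewrite inE => Pi ->; exact Pi.
Qed.

Lemma part_sum (I J : finType) (q : I -> J) (P : pred J) (F : I -> nat) :
  \sum_(U | P U) \sum_(u | q u == U) F u = \sum_(u | P (q u)) F u.
Proof.
rewrite (partition_big q P) //; apply: eq_bigr => U PU; apply: eq_bigl => u.
by rewrite andbC; case: (q u =P U) => //= ->; rewrite PU.
Qed.

Lemma sum_pos (I : finType) (P : pred I) (F : I -> nat) :
  0 < \sum_(i | P i) F i -> exists i, P i /\ 0 < F i.
Proof.
move=> H; case: (boolP [exists i, P i && (0 < F i)]) => [/existsP [i /andP [Pi Fi]]|H'].
  by exists i.
exfalso; move: H; rewrite lt0n sum_nat_eq0 => /negP; apply; apply/forallP => i.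
apply/implyP => Pi; move: H'; rewrite negb_exists => /forallP /(_ i).
by rewrite Pi /= -leqNgt leqn0.
Qed.

Definition conn (H : mgraph) (S : {set 'I_(nv H)}) : Prop :=
  forall A : {set 'I_(nv H)}, A \subset S -> forall a c, a \in A -> c \in S -> c \notin A ->
    exists u v, [/\ u \in A, v \in S, v \notin A & 0 < mult H u v].

Definition model (K H : mgraph) (phi : 'I_(nv H) -> option 'I_(nv K)) : Prop :=
  [/\ forall x, exists u, phi u = Some x,
      forall x, conn [set u | phi u == Some x] &
      forall x y, x != y -> mult K x y <=
        \sum_(u | phi u == Some x) \sum_(v | phi v == Some y) mult H u v].

Arguments model : clear implicits.

Lemma SomeE (T : eqType) (x y : T) : (Some x == Some y) = (x == y).
Proof. by apply/eqP/eqP => [[]|->]. Qed.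

Lemma model_refl K : model K K Some.
Proof.
split.
- by move=> x; exists x.
- move=> x A sub a c aA cS cA; exfalso.
  move: (subsetP sub a aA) cS; rewrite !inE !SomeE => /eqP ae /eqP ce.
  by move: cA; rewrite ce -ae aA.
- move=> x y _; rewrite (big_pred1 x); last by move=> u; rewrite /= SomeE.
  by rewrite (big_pred1 y) // => u; rewrite /= SomeE.
Qed.


Lemma model_emb K H G (f : 'I_(nv H) -> 'I_(nv G)) phi :
  injective f -> (forall x y, mult H x y <= mult G (f x) (f y)) ->
  model K H phi -> exists phi', model K G phi'.
Proof.
move=> inj le [sur cn sm].
pose phi' w := if [pick u | f u == w] is Some u then phi u else None.
have phif u : phi' (f u) = phi u.
  rewrite /phi'; case: pickP => [u' /eqP /inj -> //|/(_ u)]; by rewrite eqxx.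
have phiS w x : phi' w = Some x -> exists u, w = f u /\ phi u = Some x.
  rewrite /phi'; case: pickP => [u' /eqP <- e|//]; by exists u'.
exists phi'; split.
- by move=> x; case: (sur x) => u e; exists (f u); rewrite phif.
- move=> x A' sub a c aA cS cA.
  pose A := [set u | f u \in A'].
  have subA : A \subset [set u | phi u == Some x].
    apply/subsetP => u; rewrite !inE => /(subsetP sub); by rewrite inE phif.
  move: (subsetP sub a aA); rewrite inE => /eqP /phiS [a0 [ea _]].
  move: (cS); rewrite inE => /eqP /phiS [c0 [ec pc]].
  have [u [v [uA vS vA muv]]] : exists u v, [/\ u \in A, v \in [set u | phi u == Some x], v \notin A & 0 < mult H u v].
    apply: (cn x A subA a0 c0).
    - by rewrite inE -ea.
    - by rewrite inE pc.
    - by rewrite inE -ec.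
  exists (f u), (f v); split.
  + by move: uA; rewrite inE.
  + move: vS; rewrite !inE => /eqP h; apply/eqP; rewrite -h; exact: phif.
  + by move: vA; rewrite inE.
  + exact: leq_trans muv (le u v).
- move=> x y xy; apply: (leq_trans (sm x y xy)).
  apply: (@leq_trans (\sum_(u | phi' (f u) == Some x) \sum_(v | phi v == Some y) mult G (f u) (f v))).
    rewrite [X in _ <= X](eq_bigl (fun u => phi u == Some x)); last by move=> u; rewrite phif.
    apply: leq_sum => u _; apply: leq_sum => v _; exact: le.
  apply: (@leq_trans (\sum_(u | phi' (f u) == Some x) \sum_(w | phi' w == Some y) mult G (f u) w)).
    apply: leq_sum => u _.
    rewrite [X in X <= _](eq_bigl (fun v => phi' (f v) == Some y)); last by move=> v; rewrite phif.
    exact: (sum_inj_le (fun w => phi' w == Some y) (fun w => mult G (f u) w) inj).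
  exact: (sum_inj_le (fun w => phi' w == Some x) (fun w => \sum_(w' | phi' w' == Some y) mult G w w') inj).
Qed.


Lemma model_contr K G H phi :
  contract_edge G H -> model K H phi -> exists phi', model K G phi'.
Proof.
move=> [a [b [ab1 [q [qsur [qab [qfib qsum]]]]]]] [sur cn sm].
exists (fun u => phi (q u)); split.
- move=> x; case: (sur x) => U e; case: (qsur U) => u qu; exists u; by rewrite qu.
- move=> x A' sub a' c aA cS cA.
  have inS w : (w \in [set u | phi (q u) == Some x]) = (phi (q w) == Some x) by rewrite inE.
  case: (boolP [&& a \in A', b \in [set u | phi (q u) == Some x] & b \notin A']) => [/and3P [aA' bS bA']|n1].
    by exists a, b; split => //; rewrite ab1.
  case: (boolP [&& b \in A', a \in [set u | phi (q u) == Some x] & a \notin A']) => [/and3P [bA' aS aA']|n2].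
    by exists b, a; split => //; rewrite mult_sym ab1.
  have sat w w' : w \in A' -> w' \in [set u | phi (q u) == Some x] -> q w = q w' -> w' \in A'.
    move=> wA w'S /qfib [e|[]]; first by rewrite -e.
    rewrite !inE => /orP [] /eqP ew /orP [] /eqP ew'; subst w w' => //.
      by case: (boolP (b \in A')) => // h; rewrite wA w'S h in n1.
    by case: (boolP (a \in A')) => // h; rewrite wA w'S h in n2.
  pose A := [set q w | w in A'].
  have subA : A \subset [set U | phi U == Some x].
    apply/subsetP => U /imsetP [w wA ->]; move: (subsetP sub w wA); by rewrite !inE.
  have [U [V [UA VS VA mUV]]] : exists U V, [/\ U \in A, V \in [set U | phi U == Some x], V \notin A & 0 < mult H U V].
    apply: (cn x A subA (q a') (q c)).
    - exact: imset_f.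
    - by move: cS; rewrite !inE.
    - apply/imsetP => [[w wA qc]]; move: cA; by rewrite (sat w c wA cS (esym qc)).
  have UV : U != V by apply: contraTneq mUV => ->; rewrite mult_irr.
  move: mUV; rewrite (qsum _ _ UV) => /sum_pos [u [/eqP qu /sum_pos [v [/eqP qv muv]]]].
  case/imsetP: UA => w wA eU.
  have uS : u \in [set u | phi (q u) == Some x].
    by rewrite inE qu; move: (subsetP subA _ (imset_f q wA)); rewrite inE -eU.
  exists u, v; split => //.
  - by apply: (sat w u wA uS); rewrite qu.
  - by rewrite inE qv; move: VS; rewrite inE.
  - apply: contra VA => vA; rewrite -qv; exact: imset_f.
- move=> x y xy; apply: (leq_trans (sm x y xy)).
  rewrite -(part_sum q (fun U => phi U == Some x)).
  apply: eq_leq; apply: eq_bigr => U pU.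
  rewrite (eq_bigr (fun V => \sum_(u' | q u' == U) \sum_(v | q v == V) mult G u' v)); last first.
    move=> V pV; apply: qsum; apply: contraTneq pU => ->; move/eqP: pV => ->.
    by rewrite SomeE eq_sym.
  rewrite exchange_big /=; apply: eq_bigr => u _.
  exact: (part_sum q (fun V => phi V == Some y) (fun v => mult G u v)).
Qed.


Lemma model_iso K G H phi : iso K G -> model K H phi -> exists phi', model G H phi'.
Proof.
move=> [f [[g fK gK] fm]] [sur cn sm].
have E u x : (omap f (phi u) == Some x) = (phi u == Some (g x)).
  case: (phi u) => [z|] //=; rewrite !SomeE.
  apply/eqP/eqP => [<-|->]; by rewrite ?fK ?gK.
exists (fun u => omap f (phi u)); split.
- move=> x; case: (sur (g x)) => u e; exists u; by rewrite e /= gK.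
- move=> x; have -> : [set u | omap f (phi u) == Some x] = [set u | phi u == Some (g x)].
    by apply/setP => u; rewrite !inE E.
  exact: cn.
- move=> x y xy.
  rewrite (eq_bigl (fun u => phi u == Some (g x))); last by move=> u; rewrite E.
  rewrite (eq_bigr (fun u => \sum_(v | phi v == Some (g y)) mult H u v)); last first.
    by move=> u _; apply: eq_bigl => v; rewrite E.
  rewrite -{1}(gK x) -{1}(gK y) fm; apply: sm.
  by apply: contra xy => /eqP e; rewrite -(gK x) -(gK y) e.
Qed.

Lemma reaches_model G K : reaches G K -> exists phi, model K G phi.
Proof.
elim => [H|G0 H K0 st _ [phi m]]; first by exists Some; exact: model_refl.
case: st => [[v [_ [_ [f [inj [_ e]]]]]]|[[a [b [_ [f [fb e]]]]]|ce]].
- by apply: (model_emb (f := f) inj _ m) => x y; rewrite e.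
- by apply: (model_emb (f := f) (bij_inj fb) _ m) => x y; rewrite e leq_subr.
- exact: (model_contr ce m).
Qed.

Lemma minor_model G H : is_minor G H -> exists phi, model G H phi.
Proof.
move=> [K [r i]]; case: (reaches_model r) => phi m; exact: (model_iso i m).
Qed.


Lemma usp_adj (H : mgraph) u v rest es i : @is_usp H u v rest es -> i < size rest ->
  mult H (nth u (u :: rest) i) (nth u rest i) <= 1.
Proof.
case => [[hl hu hs he] hmin huniq] hi; rewrite leqNgt; apply/negP => h2.
set e := nth 0 es i.
pose e' := if e == 0 then 1 else 0.
have e'ne : e' != e by rewrite /e'; case: (e =P 0) => [->|/eqP]; rewrite // eq_sym.
pose es' := set_nth 0 es i e'.
have p : is_path u v rest es'.
  split => //; first by rewrite /es' size_set_nth hs; apply/maxn_idPr.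
  move=> j hj; rewrite /es' nth_set_nth /=; case: (j =P i) => [->|_]; last exact: he.
  by apply: leq_trans h2; rewrite /e'; case: (e == 0).
case: (huniq _ _ p erefl) => _ ees.
have h := nth_set_nth 0 es i e' i; rewrite /= eqxx -/es' ees in h.
by move: e'ne; rewrite -h eqxx.
Qed.

Lemma usp_far (H : mgraph) u v rest es i j : @is_usp H u v rest es -> i < j -> j < size rest ->
  mult H (nth u (u :: rest) i) (nth u rest j) = 0.
Proof.
case => [[hl hu hs he] hmin huniq] ij jr; apply/eqP; rewrite -leqn0 leqNgt; apply/negP => hm.
set s := u :: rest.
pose rest' := take i rest ++ drop j rest.
pose es' := take i es ++ 0 :: drop j.+1 es.
have s'E : u :: rest' = take i.+1 s ++ drop j.+1 s by [].
have szr : size rest' = i + (size rest - j).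
  by rewrite /rest' size_cat size_drop size_takel //; lia.
have nths l : nth u (u :: rest') l = if l < i.+1 then nth u s l else nth u s (j.+1 + (l - i.+1)).
  rewrite s'E nth_cat size_takel /s /=; last by lia.
  case: ifP => hl'; last by rewrite nth_drop.
  by case: l hl' => //= l' hl'; rewrite nth_take.
have nthe l : nth 0 es' l = if l < i then nth 0 es l else if l == i then 0 else nth 0 es (j.+1 + (l - i.+1)).
  rewrite /es' nth_cat size_takel; last by lia.
  case: ifP => hl'; first by rewrite nth_take.
  case: (l =P i) => [->|ne]; first by rewrite subnn.
  have -> : l - i = (l - i.+1).+1 by lia.
  by rewrite /= nth_drop.
have p : is_path u v rest' es'.
  split.
  - have hl2 := hl; rewrite -(cat_take_drop j rest) last_cat (drop_nth u jr) /= in hl2.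
    by rewrite /rest' last_cat (drop_nth u jr) /=.
  - rewrite s'E; apply: subseq_uniq hu; rewrite -[X in subseq _ X](cat_take_drop j.+1 s).
    apply: cat_subseq => //; rewrite -(@take_takel _ i.+1 j.+1 s) ?take_subseq //; lia.
  - by rewrite szr /es' size_cat /= size_drop size_takel; lia.
  - move=> l hl'; rewrite szr in hl'.
    have -> : nth u rest' l = nth u (u :: rest') l.+1 by [].
    rewrite nthe !nths.
    case: (ltnP l i) => li.
      rewrite !ltnS (ltnW li) li; apply: he; lia.
    case: (l =P i) => [e|ne].
      subst l; rewrite ltnSn ltnn subnn addn0; exact: hm.
    have -> : (l < i.+1) = false by lia.
    have -> : (l.+1 < i.+1) = false by lia.
    have -> : j.+1 + (l.+1 - i.+1) = (j.+1 + (l - i.+1)).+1 by lia.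
    apply: he; lia.
have := hmin _ _ p; rewrite szr; lia.
Qed.


Lemma usp_lt (H : mgraph) u v rest es i j : @is_usp H u v rest es -> i < j -> j < size (u :: rest) ->
  mult H (nth u (u :: rest) i) (nth u (u :: rest) j) <= (i.+1 == j).
Proof.
move=> P ij js; case: j ij js => // j ij js.
case: (i =P j) => [e|ne].
  subst j; rewrite eqxx; exact: (usp_adj P js).
by rewrite (usp_far P) //; lia.
Qed.

Lemma usp_mult_le (H : mgraph) u v rest es a b : @is_usp H u v rest es ->
  a \in u :: rest -> b \in u :: rest ->
  mult H a b <= ((index a (u :: rest)).+1 == index b (u :: rest)) || ((index b (u :: rest)).+1 == index a (u :: rest)).
Proof.
move=> P aS bS.
have ea := nth_index u aS; have eb := nth_index u bS.
have ia := index_mem a (u :: rest); have ib := index_mem b (u :: rest).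
rewrite -ia in aS; rewrite -ib in bS.
case: (ltngtP (index a (u :: rest)) (index b (u :: rest))) => h.
- rewrite -{1}ea -{1}eb; apply: leq_trans (usp_lt P h bS) _; by case: (_ == _).
- rewrite mult_sym -{1}ea -{1}eb; apply: leq_trans (usp_lt P h aS) _; by rewrite orbC; case: (_ == _).
- by rewrite -ea -eb h mult_irr.
Qed.

Definition sidx (H : mgraph) u (s : seq 'I_(nv H)) (S : {set 'I_(nv H)}) (l : nat) :=
  (l < size s) && (nth u s l \in S).

Lemma usp_interval (H : mgraph) u v rest es (S : {set 'I_(nv H)}) : @is_usp H u v rest es ->
  (forall w, w \in S -> w \in u :: rest) -> conn S ->
  forall a b c, a < b -> b < c -> sidx u (u :: rest) S a -> sidx u (u :: rest) S c ->
  sidx u (u :: rest) S b.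
Proof.
move=> P sub cn a b c ab bc /andP [ha Sa] /andP [hc Sc].
have hb : b < size (u :: rest) by lia.
rewrite /sidx hb /=; apply/negPn/negP => Sb.
have us : uniq (u :: rest) by case: P => [[]].
pose A := [set w in S | index w (u :: rest) < b].
have subA : A \subset S by apply/subsetP => w; rewrite inE => /andP [].
have [x [y [xA yS yA mxy]]] : exists x y, [/\ x \in A, y \in S, y \notin A & 0 < mult H x y].
  apply: (cn A subA (nth u (u :: rest) a) (nth u (u :: rest) c)) => //.
  - by rewrite inE Sa index_uniq.
  - by rewrite inE Sc index_uniq //= -leqNgt ltnW // (leq_trans bc).
move: xA yA; rewrite !inE yS andTb -leqNgt => /andP [xS xb] yb.
have iy : index y (u :: rest) != b.
  apply: contra Sb => /eqP <-; by rewrite nth_index ?sub.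
have hle := usp_mult_le P (sub _ xS) (sub _ yS).
have h2 : ((index x (u :: rest)).+1 == index y (u :: rest)) || ((index y (u :: rest)).+1 == index x (u :: rest)).
  by move: (leq_trans mxy hle); case: (_ || _).
by case/orP: h2 => /eqP; lia.
Qed.


Definition interval (P : nat -> bool) :=
  forall a b c, a < b -> b < c -> P a -> P c -> P b.

Lemma adj_lt (PS PT : nat -> bool) i j i' j' :
  (forall l, PS l -> PT l -> False) -> interval PS -> interval PT ->
  PS i -> PT j -> PS i' -> PT j' ->
  (i.+1 == j) || (j.+1 == i) -> (i'.+1 == j') || (j'.+1 == i') -> i < i' -> False.
Proof.
move=> D IS IT Si Tj Si' Tj' h1 h2 ii'.
case/orP: h1 => /eqP h1.
  case: (j =P i') => [e|ne]; first by rewrite e in Tj; exact: (D i').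
  apply: (D j) => //; apply: (IS i j i') => //; lia.
case/orP: h2 => /eqP h2.
  apply: (D i) => //; apply: (IT j i j') => //; lia.
case: (j' =P i) => [e|ne]; first by rewrite e in Tj'; exact: (D i).
apply: (D j') => //; apply: (IS i j' i') => //; lia.
Qed.

Lemma adj_unique (PS PT : nat -> bool) i j i' j' :
  (forall l, PS l -> PT l -> False) -> interval PS -> interval PT ->
  PS i -> PT j -> PS i' -> PT j' ->
  (i.+1 == j) || (j.+1 == i) -> (i'.+1 == j') || (j'.+1 == i') -> i = i' /\ j = j'.
Proof.
move=> D IS IT Si Tj Si' Tj' h1 h2.
case: (ltngtP i i') => h.
- by exfalso; exact: (adj_lt D IS IT Si Tj Si' Tj' h1 h2 h).
- by exfalso; exact: (adj_lt D IS IT Si' Tj' Si Tj h2 h1 h).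
- subst i'; split => //.
  case: (j =P j') => // ne; exfalso.
  case/orP: h1 => /eqP h1; case/orP: h2 => /eqP h2; try lia.
  + apply: (D i) => //; apply: (IT j' i j) => //; lia.
  + apply: (D i) => //; apply: (IT j i j') => //; lia.
Qed.

Lemma path_sum (H : mgraph) u v rest es (S T : {set 'I_(nv H)}) : @is_usp H u v rest es ->
  (forall w, w \in S -> w \in u :: rest) -> (forall w, w \in T -> w \in u :: rest) ->
  (forall w, w \in S -> w \in T -> False) -> conn S -> conn T ->
  \sum_(a in S) \sum_(b in T) mult H a b <= 1.
Proof.
move=> P subS subT D cS cT.
set s := u :: rest.
pose adj a b := ((index a s).+1 == index b s) || ((index b s).+1 == index a s).
have le1 : \sum_(a in S) \sum_(b in T) mult H a b <= \sum_(a in S) \sum_(b in T) (adj a b : nat).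
  apply: leq_sum => a aS; apply: leq_sum => b bT; exact: usp_mult_le P (subS _ aS) (subT _ bT).
apply: leq_trans le1 _.
have idxS w (A : {set 'I_(nv H)}) : w \in A -> w \in s -> sidx u s A (index w s).
  by move=> wA ws; rewrite /sidx index_mem ws nth_index.
have IS : interval (sidx u s S).
  move=> a b c ab bc; exact: (usp_interval P subS cS ab bc).
have IT : interval (sidx u s T).
  move=> a b c ab bc; exact: (usp_interval P subT cT ab bc).
have DD : forall l, sidx u s S l -> sidx u s T l -> False.
  by move=> l /andP [_ h1] /andP [_ h2]; exact: (D _ h1 h2).
have uniqab a b a' b' : a \in S -> b \in T -> a' \in S -> b' \in T -> adj a b -> adj a' b' -> a = a' /\ b = b'.
  move=> aS bT a'S b'T h1 h2.
  have [e1 e2] := adj_unique DD IS IT (idxS _ _ aS (subS _ aS)) (idxS _ _ bT (subT _ bT))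
     (idxS _ _ a'S (subS _ a'S)) (idxS _ _ b'T (subT _ b'T)) h1 h2.
  split.
  - by rewrite -(nth_index u (subS _ aS)) -(nth_index u (subS _ a'S)) e1.
  - by rewrite -(nth_index u (subT _ bT)) -(nth_index u (subT _ b'T)) e2.
case: (boolP [exists a, exists b, [&& a \in S, b \in T & adj a b]]) => [/existsP [a0 /existsP [b0 /and3P [a0S b0T ab0]]]|none].
  rewrite (bigD1 a0) //= (bigD1 b0) //= ab0.
  rewrite big1; last first.
    move=> b /andP [bT ne]; case: (boolP (adj a0 b)) => // h.
    by case: (uniqab _ _ _ _ a0S b0T a0S bT ab0 h) => _ e; rewrite e eqxx in ne.
  rewrite big1 //.
  move=> a /andP [aS ne]; apply: big1 => b bT; case: (boolP (adj a b)) => // h.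
  by case: (uniqab _ _ _ _ a0S b0T aS bT ab0 h) => e _; rewrite e eqxx in ne.
rewrite big1 // => a aS; apply: big1 => b bT; case: (boolP (adj a b)) => // h.
by move: none; rewrite negb_exists => /forallP /(_ a); rewrite negb_exists => /forallP /(_ b); rewrite aS bT h.
Qed.


Lemma lemmaA (G H : mgraph) phi u v rest es :
  (forall x y, x != y -> 2 <= mult G x y) -> model G H phi -> @is_usp H u v rest es ->
  nv G - 1 <= nv H - (size rest).+1.
Proof.
move=> sat [sur cn sm] P.
set s := u :: rest.
pose J := [set x | [exists w, (phi w == Some x) && (w \notin s)]].
have notJ x w : x \notin J -> phi w == Some x -> w \in s.
  rewrite inE negb_exists => /forallP /(_ w); rewrite negb_and negbK => /orP [/negP //|//].
have c1 x y : x \notin J -> y \notin J -> x = y.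
  move=> xJ yJ; apply/eqP; apply/negPn/negP => xy.
  have := sm x y xy.
  rewrite (eq_bigl (fun a => a \in [set w | phi w == Some x])); last by move=> a; rewrite inE.
  rewrite (eq_bigr (fun a => \sum_(b in [set w | phi w == Some y]) mult H a b)); last first.
    by move=> a _; apply: eq_bigl => b; rewrite inE.
  move=> h; have := leq_trans (sat x y xy) h.
  have : \sum_(a in [set w | phi w == Some x]) \sum_(b in [set w | phi w == Some y]) mult H a b <= 1.
    apply: (path_sum P).
    - by move=> w; rewrite inE; exact: notJ.
    - by move=> w; rewrite inE; exact: notJ.
    - move=> w; rewrite !inE => /eqP -> /eqP [e]; by rewrite e eqxx in xy.
    - exact: cn.
    - exact: cn.
  move=> h1 h2; have := leq_trans h2 h1; by [].
have c2 : #|~: J| <= 1.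
  case: (set_0Vmem (~: J)) => [->|[x0 x0J]]; first by rewrite cards0.
  rewrite -(cards1 x0); apply: subset_leq_card; apply/subsetP => x xJ.
  rewrite inE; apply/eqP; apply: c1; by rewrite -in_setC.
have c3 : #|J| <= #|[set w | w \notin s]|.
  rewrite -(card_imset _ (@Some_inj _)).
  apply: leq_trans (leq_imset_card phi _).
  apply: subset_leq_card; apply/subsetP => o /imsetP [x]; rewrite inE => /existsP [w /andP [/eqP pw ws]] ->.
  by apply/imsetP; exists w; rewrite ?inE.
have c4 : #|[set w | w \notin s]| = nv H - size s.
  have := cardsC [set w | w \in s]; rewrite card_ord.
  have -> : ~: [set w | w \in s] = [set w | w \notin s] by apply/setP => w; rewrite !inE.
  have -> : #|[set w | w \in s]| = size s.
    rewrite cardsE; apply/card_uniqP; by case: P => [[]].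
  lia.
have := cardsC J; rewrite card_ord.
rewrite c4 in c3; rewrite /s /= in c3; move=> h; rewrite -h; apply: leq_trans _ c3.
by rewrite leq_subLR addnC leq_add2r.
Qed.


Lemma max_exists (P : nat -> Prop) B : (exists k, P k) -> (forall k, P k -> k <= B) ->
  exists k, P k /\ forall k', P k' -> k' <= k.
Proof.
elim: B => [|B IH] [k Pk] bd.
  exists k; split => // k' /bd; rewrite leqn0 => /eqP ->; exact: leq0n.
case: (classic (P B.+1)) => h.
  by exists B.+1; split.
apply: IH; first by exists k.
move=> k' Pk'; have := bd _ Pk'; rewrite leq_eqVlt => /orP [/eqP e|//].
by rewrite e in Pk'.
Qed.

Lemma usp_single (H : mgraph) (u : 'I_(nv H)) : @is_usp H u u [::] [::].
Proof.
split.
- by split => //= i.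
- by move=> r e _.
- by move=> [|? ?] [|? ?] [_ _ hs _] //=.
Qed.

Lemma usp_bound (H : mgraph) u v rest es : @is_usp H u v rest es -> (size rest).+1 <= nv H.
Proof.
case => [[_ hu _ _] _ _].
have := max_card (mem (u :: rest)); rewrite card_ord.
by move/card_uniqP: hu => ->.
Qed.

Lemma usp_exists (H : mgraph) : exists k, usp_eq H k.
Proof.
have := @max_exists (fun k => exists u v rest es, @is_usp H u v rest es /\ (size rest).+1 = k) (nv H).
case.
- exists 1, (Ordinal (nv_pos H)), (Ordinal (nv_pos H)), [::], [::]; split => //; exact: usp_single.
- by move=> k [u [v [rest [es [P <-]]]]]; exact: usp_bound P.
move=> k [hk mx]; exists k; split => // u v rest es P; apply: mx; by exists u, v, rest, es.
Qed.

Lemma usp_sat (G : mgraph) m : 2 <= m -> saturated m G -> usp_eq G 1.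
Proof.
move=> m2 sat; split.
  exists (Ordinal (nv_pos G)), (Ordinal (nv_pos G)), [::], [::]; split => //; exact: usp_single.
move=> u v [|w t] es P //.
have uw : u != w.
  case: P => [[_ hu _ _] _ _]; move: hu; rewrite /= inE negb_or => /andP [/andP [ne _] _] //.
have := usp_adj P (ltn0Sn _); rewrite /= sat // => h; by have := leq_trans m2 h.
Qed.

Lemma minor_refl G : is_minor G G.
Proof. exists G; split; first exact: reaches_refl. by exists id; split => //; exists id. Qed.

Lemma floor_lb (G : mgraph) f : (forall H s, is_minor G H -> sp_eq H s -> f <= s) ->
  f = nv G - 1 -> sp_floor_eq G f.
Proof.
move=> lb ef; split => //; exists G; split; first exact: minor_refl.
case: (usp_exists G) => k hk.
have k1 : 1 <= k by case: hk => [[u [v [rest [es [_ <-]]]]] _].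
have := lb G (nv G - k) (minor_refl G) (ex_intro _ k (conj hk erefl)).
move=> h; exists k; split => //; lia.
Qed.


Definition ind n (a b x y : 'I_n) : nat := ((x == a) && (y == b)) || ((x == b) && (y == a)).

Lemma ind_sym n (a b x y : 'I_n) : ind a b x y = ind a b y x.
Proof. by rewrite /ind; case: (x == a); case: (x == b); case: (y == a); case: (y == b). Qed.

Lemma ind_irr n (a b x : 'I_n) : a != b -> ind a b x x = 0.
Proof.
move=> ab; rewrite /ind; case: (x =P a) => [e|_]; case: (x =P b) => [e'|_] //=.
by rewrite -e -e' eqxx in ab.
Qed.

Lemma addE_sym (G : mgraph) (a b : 'I_(nv G)) x y : mult G x y + ind a b x y = mult G y x + ind a b y x.
Proof. by rewrite mult_sym ind_sym. Qed.
Lemma subE_sym (G : mgraph) (a b : 'I_(nv G)) x y : mult G x y - ind a b x y = mult G y x - ind a b y x.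
Proof. by rewrite mult_sym ind_sym. Qed.
Lemma subE_irr (G : mgraph) (a b : 'I_(nv G)) x : mult G x x - ind a b x x = 0.
Proof. by rewrite mult_irr. Qed.
Lemma addE_irr G (a b : 'I_(nv G)) (ab : a != b) x : mult G x x + ind a b x x = 0.
Proof. by rewrite mult_irr ind_irr. Qed.

Definition addE G (a b : 'I_(nv G)) (ab : a != b) : mgraph :=
  @MGraph (nv G) (fun x y => mult G x y + ind a b x y) (@addE_sym G a b) (addE_irr ab) (nv_pos G).
Definition subE G (a b : 'I_(nv G)) : mgraph :=
  @MGraph (nv G) (fun x y => mult G x y - ind a b x y) (@subE_sym G a b) (@subE_irr G a b) (nv_pos G).

Arguments subE : clear implicits.

Lemma reaches_trans A B C : reaches A B -> reaches B C -> reaches A C.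
Proof. elim => // G0 H K st _ IH r; apply: reaches_step st (IH r). Qed.

Lemma del_subE K (a b : 'I_(nv K)) : 0 < mult K a b -> del_edge K (subE K a b).
Proof. move=> h; exists a, b; split => //; exists id; split => //; by exists id. Qed.

Lemma minor_sub G (x y : 'I_(nv G)) (xy : x != y) H : is_minor (addE xy) H -> is_minor G H.
Proof.
move=> [K [r [f [[g fK gK] fm]]]].
pose a := g x; pose b := g y.
have indE u v : ind x y (f u) (f v) = ind a b u v.
  by rewrite /ind -{1}(gK x) -{1}(gK y) -{2}(gK x) -{2}(gK y) !(inj_eq (can_inj fK)).
exists (subE K a b); split.
  apply: reaches_trans r (reaches_step _ (reaches_refl _)); right; left; apply: del_subE.
  by rewrite -fm /= indE /ind !eqxx addn1.
exists f; split; first by exists g.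
move=> u v; rewrite /= -fm /= indE addnK //.
Qed.

Lemma minor_addE G (x y : 'I_(nv G)) (xy : x != y) : is_minor G (addE xy).
Proof.
exists (subE (addE xy) x y); split.
  apply: reaches_step (reaches_refl _); right; left; apply: del_subE.
  by rewrite /= /ind !eqxx addn1.
exists id; split; first by exists id.
by move=> u v /=; rewrite addnK.
Qed.

Lemma no_iso_addE G (x y : 'I_(nv G)) (xy : x != y) : iso (addE xy) G -> False.
Proof.
move=> [f [fb fm]].
have e1 : \sum_u \sum_v mult G (f u) (f v) = \sum_u \sum_v mult G u v.
  rewrite [RHS](reindex_inj (bij_inj fb)) /=; apply: eq_bigr => u _.
  by rewrite [RHS](reindex_inj (bij_inj fb)).
have e2 : \sum_u \sum_v mult G (f u) (f v) = \sum_u \sum_v mult G u v + \sum_u \sum_v ind x y u v.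
  rewrite -big_split /=; apply: eq_bigr => u _; rewrite -big_split /=; apply: eq_bigr => v _.
  by rewrite fm.
have : \sum_u \sum_v ind x y u v = 0 by move: e2; rewrite e1 => /eqP; rewrite -{1}[X in X == _]addn0 eqn_add2l eq_sym => /eqP.
move/eqP; rewrite sum_nat_eq0 => /forallP /(_ x) /=; rewrite sum_nat_eq0 => /forallP /(_ y) /=.
by rewrite /ind !eqxx.
Qed.

Lemma sat_from_model G H phi m : model G H phi -> nv G = nv H ->
  (forall x y, x != y -> mult G x y = m) -> forall u v, u != v -> m <= mult H u v.
Proof.
move=> [sur cn sm] eqn sat.
pose u0 := Ordinal (nv_pos H).
pose psi x := odflt u0 [pick u | phi u == Some x].
have phipsi x : phi (psi x) = Some x.
  rewrite /psi; case: pickP => [u /eqP //|h]; case: (sur x) => u e; by move: (h u); rewrite e eqxx.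
have inj : injective psi by move=> x y e; have := phipsi x; rewrite e phipsi => -[].
have onto w : w \in codom psi by apply: inj_card_onto => //; rewrite !card_ord eqn.
have predE x : (fun w => phi w == Some x) =1 pred1 (psi x).
  move=> w /=; case/codomP: (onto w) => x' ->; by rewrite phipsi SomeE (inj_eq inj).
move=> u v; case/codomP: (onto u) => x ->; case/codomP: (onto v) => y -> uv.
have xy : x != y by apply: contra uv => /eqP e; rewrite e.
have := sm x y xy; rewrite (big_pred1 _ (predE x)) (big_pred1 _ (predE y)) sat //.
Qed.

Lemma iso_sat m G H : nv H = nv G -> saturated m H -> saturated m G -> iso H G.
Proof.
move=> e sH sG; exists (cast_ord e); split.
  exists (cast_ord (esym e)); [exact: cast_ordK | exact: cast_ordKV].
move=> x y; case: (x =P y) => [->|/eqP ne]; first by rewrite !mult_irr.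
rewrite sG ?sH //; by rewrite (inj_eq (@cast_ord_inj _ _ e)).
Qed.

Theorem lemma7p5 (m n : nat) (G : mgraph) :
  2 <= m ->
  (minor_maximal (classC n m) G <-> (nv G = n /\ saturated m G)).
Proof.
move=> m2; split.
- case => [[nvG mle [_ lb]] mx]; split => // x y xy.
  have := mle x y; rewrite leq_eqVlt => /orP [/eqP //|lt]; exfalso.
  have CG' : classC n m (addE xy).
    split => //.
    - move=> a b /=; rewrite /ind.
      case: (boolP (((a == x) && (b == y)) || ((a == y) && (b == x)))) => h /=; last by rewrite addn0 mle.
      rewrite addn1; case/orP: h => /andP [/eqP -> /eqP ->] //; by rewrite mult_sym.
    - apply: floor_lb => [H s mi sps|]; last by rewrite /= nvG.
      exact: lb (minor_sub mi) sps.
  exact: no_iso_addE (mx _ CG' (minor_addE xy)).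
- case => nvG sat.
  have mle x y : mult G x y <= m.
    by case: (x =P y) => [->|/eqP ne]; [rewrite mult_irr | rewrite sat].
  have sat2 x y : x != y -> 2 <= mult G x y by move=> ne; rewrite sat.
  split.
    split => //; apply: floor_lb => [H s mi [k [[[u [v [rest [es [P hk]]]]] _] ->]]|]; last by rewrite nvG.
    case: (minor_model mi) => phi md.
    rewrite -nvG -hk; exact: lemmaA sat2 md P.
  move=> H [nvH mleH _] mi; case: (minor_model mi) => phi md.
  apply: (iso_sat (m := m)); [by rewrite nvH nvG | | exact: sat].
  move=> u v uv; apply/eqP; rewrite eqn_leq mleH /=.
  by apply: (sat_from_model md _ sat) => //; rewrite nvG nvH.
Qed.
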